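(* Let $C_0,\beta_h,\gamma_h,\beta_v,\gamma_v>0$ be constants and consider the ODE \[\frac{di_h}{dt}=\frac{C_0\beta_h\beta_v\, i_h(1-i_h)}{\beta_v i_h+\gamma_v}-\gamma_h i_h ,\qquad i_h(0)\in[0,1].\] Let $\mathcal{R}_0=\sqrt{\frac{\beta_h}{\gamma_v}\cdot\frac{C_0\beta_v}{\gamma_h}}$. The ODE has two equilibrium points \[E^f=0\quad\text{and}\quad E^e=\frac{C_0\beta_h\beta_v-\gamma_h\gamma_v}{C_0\beta_h\beta_v+\beta_v\gamma_h},\] and (i) $E^f$ is globally asymptotically stable when $\mathcal{R}_0\le 1$, globally exponentially stable when $\mathcal{R}_0<1$, and unstable when $\mathcal{R}_0>1$; (ii) when $\mathcal{R}_0>1$, $E^e$ is locally asymptotically stable, and it is globally asymptotically stable when $i_h(0)\in(0,1]$.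
   Context: For an ODE $y'=f(y)$ with equilibrium $y_0$ ($f(y_0)=0$): $y_0$ is stable if for every $\epsilon>0$ there is $\delta>0$ such that $|y(0)-y_0|<\delta$ implies $|y(t)-y_0|<\epsilon$ for all $t>0$; locally asymptotically stable if there is $a>0$ such that $|y(0)-y_0|\le a$ implies $y(t)\to y_0$; globally asymptotically stable if $y(t)\to y_0$ as $t\to\infty$ (for all considered initial values); globally exponentially stable if it is globally asymptotically stable and there are $M,\kappa>0$ with $|y(t)-y_0|\le Me^{-\kappa t}$; unstable if not stable. *)

(* Defs.v *)
From Stdlib Require Import Reals.
Open Scope R_scope.

Definition F (C0 bh gh bv gv : R) (y : R) : R :=
  C0 * bh * bv * y * (1 - y) / (bv * y + gv) - gh * y.

Definition Rnum0 (C0 bh gh bv gv : R) : R :=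
  sqrt ((bh / gv) * (C0 * bv / gh)).

Definition Ee (C0 bh gh bv gv : R) : R :=
  (C0 * bh * bv - gh * gv) / (C0 * bh * bv + bv * gh).

Definition is_sol (f : R -> R) (y : R -> R) : Prop :=
  (forall eps, 0 < eps -> exists delta, 0 < delta /\
     forall t, 0 <= t < delta -> Rabs (y t - y 0) < eps) /\
  (forall t, 0 < t -> derivable_pt_lim y t (f (y t))).

Definition conv_to (y : R -> R) (y0 : R) : Prop :=
  forall eps, 0 < eps -> exists T, forall t, T <= t -> Rabs (y t - y0) < eps.

Definition stable (f : R -> R) (S : R -> Prop) (y0 : R) : Prop :=
  forall eps, 0 < eps -> exists delta, 0 < delta /\
    forall y, is_sol f y -> S (y 0) -> Rabs (y 0 - y0) < delta ->
      forall t, 0 < t -> Rabs (y t - y0) < eps.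

Definition unstable (f : R -> R) (S : R -> Prop) (y0 : R) : Prop :=
  ~ stable f S y0.

Definition loc_asym_stable (f : R -> R) (S : R -> Prop) (y0 : R) : Prop :=
  exists a, 0 < a /\
    forall y, is_sol f y -> S (y 0) -> Rabs (y 0 - y0) <= a -> conv_to y y0.

Definition glob_asym_stable (f : R -> R) (S : R -> Prop) (y0 : R) : Prop :=
  forall y, is_sol f y -> S (y 0) -> conv_to y y0.

Definition glob_exp_stable (f : R -> R) (S : R -> Prop) (y0 : R) : Prop :=
  glob_asym_stable f S y0 /\
  exists M kappa, 0 < M /\ 0 < kappa /\
    forall y, is_sol f y -> S (y 0) ->
      forall t, 0 <= t -> Rabs (y t - y0) <= M * exp (- kappa * t).

Definition closed01 (x : R) : Prop := 0 <= x <= 1.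
Definition half_open01 (x : R) : Prop := 0 < x <= 1.

(* Main.v *)
Require Import Defs.
From Stdlib Require Import Reals Ranalysis5 Lra Psatz Classical ClassicalEpsilon.
Open Scope R_scope.

Lemma my_ln_le a b : 0 < a -> a <= b -> ln a <= ln b.
Proof. intros h1 h2. destruct h2 as [h2|h2]. left; apply ln_increasing; lra. subst; lra. Qed.

Lemma dlim_eq f x l l' : derivable_pt_lim f x l -> l = l' -> derivable_pt_lim f x l'.
Proof. intros h e; subst; exact h. Qed.

Lemma nonincr (g g' : R -> R) (a b : R) :
  a < b ->
  continuity_pt g a ->
  (forall t, a < t <= b -> derivable_pt_lim g t (g' t)) ->
  (forall t, a < t < b -> g' t <= 0) ->
  g b <= g a.
Proof.
  intros hab hc hd hn.
  assert (H : forall a', a < a' < b -> g b <= g a').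
  { intros a' ha'. destruct (MVT_cor2 g g' a' b) as [c [hc1 hc2]]; [lra| intros c hc'; apply hd; lra|].
    assert (g' c <= 0) by (apply hn; lra). nra. }
  destruct (Rle_or_lt (g b) (g a)) as [h|h]; [exact h|].
  exfalso.
  unfold continuity_pt, continue_in, limit1_in, limit_in in hc.
  destruct (hc (g b - g a)) as [d [hd0 hd1]]; [lra|].
  assert (0 < Rmin d (b-a)) by (apply Rmin_glb_lt; lra).
  pose proof (Rmin_l d (b-a)); pose proof (Rmin_r d (b-a)).
  set (a' := a + Rmin d (b - a) / 2).
  assert (ha' : a < a' < b) by (unfold a'; lra).
  specialize (hd1 a'). simpl in hd1. unfold R_dist, D_x, no_cond in hd1.
  assert (HH2: Rabs (g a' - g a) < g b - g a).
  { apply hd1. split. split; [exact I| unfold a'; lra]. rewrite Rabs_right; unfold a'; lra. }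
  specialize (H a' ha'). apply Rabs_def2 in HH2. lra.
Qed.

Definition cont0 (y : R -> R) := forall t, 0 <= t -> forall eps, 0 < eps -> exists d, 0 < d /\
  forall u, 0 <= u -> Rabs (u - t) < d -> Rabs (y u - y t) < eps.

Lemma dlim_cont f x l : derivable_pt_lim f x l -> continuity_pt f x.
Proof. intro h. apply derivable_continuous_pt. exists l. exact h. Qed.

Lemma sol_cont0 f y : is_sol f y -> cont0 y.
Proof.
  intros [h0 hd] t ht eps he.
  destruct ht as [ht|ht].
  - pose proof (dlim_cont _ _ _ (hd t ht)) as hc.
    unfold continuity_pt, continue_in, limit1_in, limit_in in hc.
    destruct (hc eps he) as [d [hd0 hd1]]. exists d; split; auto.
    intros u hu hut. destruct (Req_dec u t) as [->|hne]. rewrite Rminus_diag, Rabs_R0; lra.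
    apply hd1. split. split; [exact I| auto]. exact hut.
  - subst t. destruct (h0 eps he) as [d [hd0 hd1]]. exists d; split; auto.
    intros u hu hut. apply hd1. rewrite Rminus_0_r in hut. rewrite Rabs_right in hut by lra. lra.
Qed.

Lemma last_exit_up y c t1 : cont0 y -> 0 <= t1 -> y 0 <= c -> c < y t1 ->
  exists s, 0 <= s < t1 /\ y s = c /\ forall u, s < u <= t1 -> c < y u.
Proof.
  intros hc ht1 h0 h1.
  set (E := fun u => 0 <= u <= t1 /\ y u <= c).
  assert (hb : bound E). { exists t1. intros u [hu _]. lra. }
  assert (hE : exists x, E x). { exists 0. split; lra. }
  destruct (completeness E hb hE) as [s [hs1 hs2]].
  assert (s0 : 0 <= s) by (apply hs1; split; lra).
  assert (st : s <= t1) by (apply hs2; intros u [hu _]; lra).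
  assert (hys : y s <= c).
  { destruct (Rle_or_lt (y s) c) as [h|h]; auto. exfalso.
    destruct (hc s s0 (y s - c)) as [d [hd hd']]; [lra|].
    assert (s <= s - d/2); [|lra].
    apply hs2. intros u [[hu1 hu2] hu3].
    destruct (Rle_or_lt u (s - d/2)) as [h'|h']; auto. exfalso.
    assert (u <= s) by (apply hs1; split; [lra|auto]).
    specialize (hd' u hu1). assert (Rabs (u - s) < d) by (rewrite Rabs_left1; lra).
    specialize (hd' H0). apply Rabs_def2 in hd'. lra. }
  assert (sl : s < t1). { destruct st as [st|st]; auto. subst. lra. }
  assert (hright : forall u, s < u <= t1 -> c < y u).
  { intros u hu. destruct (Rle_or_lt (y u) c) as [h|h]; auto. exfalso.
    assert (u <= s) by (apply hs1; split; [lra|auto]). lra. }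
  exists s. split; [lra|]. split; auto.
  destruct (Req_dec (y s) c) as [e|ne]; auto. exfalso.
  destruct (hc s s0 (c - y s)) as [d [hd hd']]; [lra|].
  set (u := s + Rmin (d/2) (t1 - s)).
  assert (0 < Rmin (d/2) (t1 - s)) by (apply Rmin_glb_lt; lra).
  pose proof (Rmin_l (d/2) (t1-s)); pose proof (Rmin_r (d/2) (t1-s)).
  assert (hu: s < u <= t1) by (unfold u; lra).
  specialize (hright u hu). specialize (hd' u ltac:(lra)).
  assert (Rabs (u - s) < d) by (rewrite Rabs_right; unfold u; lra).
  specialize (hd' H2). apply Rabs_def2 in hd'. lra.
Qed.

Lemma cont0_opp y : cont0 y -> cont0 (fun t => - y t).
Proof. intros h t ht eps he. destruct (h t ht eps he) as [d [hd hd']]. exists d; split; auto.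
  intros u hu hut. replace (- y u - - y t) with (- (y u - y t)) by ring. rewrite Rabs_Ropp. auto. Qed.

Lemma last_exit_down y c t1 : cont0 y -> 0 <= t1 -> c <= y 0 -> y t1 < c ->
  exists s, 0 <= s < t1 /\ y s = c /\ forall u, s < u <= t1 -> y u < c.
Proof.
  intros hc ht h0 h1.
  destruct (last_exit_up (fun t => - y t) (-c) t1 (cont0_opp y hc) ht ltac:(lra) ltac:(lra)) as [s [hs1 [hs2 hs3]]].
  exists s. split; auto. split; [lra|]. intros u hu. specialize (hs3 u hu). lra.
Qed.

Lemma ye_cont y t : cont0 y -> 0 <= t -> continuity_pt (fun u => y (Rmax u 0)) t.
Proof.
  intros hc ht. unfold continuity_pt, continue_in, limit1_in, limit_in. intros eps he.
  destruct (hc t ht eps he) as [d [hd hd']]. exists d; split; auto.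
  intros u [_ hu]. simpl in *. unfold R_dist in *. rewrite (Rmax_left t 0) by lra.
  apply hd'. apply Rmax_r.
  unfold Rmax. destruct (Rle_dec u 0).
  - rewrite (Rabs_left1 (0 - t)) by lra. destruct (Rle_or_lt 0 (u - t)); [lra| ].
    rewrite Rabs_left in hu; lra.
  - exact hu.
Qed.

Lemma ye_der y t l : 0 < t -> derivable_pt_lim y t l -> derivable_pt_lim (fun u => y (Rmax u 0)) t l.
Proof.
  intros ht hd eps he. destruct (hd eps he) as [d hd'].
  assert (hp : 0 < Rmin d t) by (apply Rmin_glb_lt; [apply cond_pos| lra]).
  exists (mkposreal _ hp). intros h hh0 hh. simpl in hh.
  pose proof (Rmin_l d t); pose proof (Rmin_r d t).
  rewrite (Rmax_left (t+h) 0), (Rmax_left t 0).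
  - apply hd'; auto. lra.
  - lra.
  - apply Rabs_def2 in hh. lra.
Qed.

Lemma key f y phi phi' k m a b : is_sol f y -> 0 <= a < b ->
 (forall t, a <= t <= b -> derivable_pt_lim phi (y t) (phi' (y t))) ->
 (forall t, a < t < b -> (phi' (y t) * f (y t) + k * phi (y t)) * exp (k*t) + m <= 0) ->
 phi (y b) * exp (k*b) + m*b <= phi (y a) * exp (k*a) + m*a.
Proof.
  intros hs hab hphi hcond.
  pose proof (sol_cont0 f y hs) as hc0.
  set (ye := fun u => y (Rmax u 0)).
  assert (eb : forall t, 0 <= t -> ye t = y t) by (intros; unfold ye; rewrite Rmax_left; lra).
  set (G := ((comp phi ye * comp exp (mult_real_fct k id)) + mult_real_fct m id)%F).
  assert (Ge : forall t, 0 <= t -> G t = phi (y t) * exp (k*t) + m*t).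
  { intros t ht. unfold G, plus_fct, mult_fct, comp, mult_real_fct, id. rewrite eb; auto. }
  rewrite <- !Ge by lra.
  apply (nonincr G (fun t => (phi' (y t) * f (y t) + k * phi (y t)) * exp (k*t) + m)); try lra.
  - unfold G. apply continuity_pt_plus.
    + apply continuity_pt_mult.
      * apply continuity_pt_comp. apply ye_cont; auto; lra.
        rewrite eb by lra. apply (dlim_cont _ _ _ (hphi a ltac:(lra))).
      * apply continuity_pt_comp. apply (dlim_cont _ _ _ (derivable_pt_lim_scal id k a 1 (derivable_pt_lim_id a))).
        apply (dlim_cont _ _ _ (derivable_pt_lim_exp _)).
    + apply (dlim_cont _ _ _ (derivable_pt_lim_scal id m a 1 (derivable_pt_lim_id a))).
  - intros t ht. unfold G.
    assert (hye : derivable_pt_lim ye t (f (y t))) by (apply ye_der; [lra| apply (proj2 hs); lra]).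
    eapply dlim_eq.
    + apply derivable_pt_lim_plus.
      * apply derivable_pt_lim_mult.
        -- apply derivable_pt_lim_comp. exact hye. rewrite eb by lra. apply hphi; lra.
        -- apply derivable_pt_lim_comp. apply derivable_pt_lim_scal, derivable_pt_lim_id. apply derivable_pt_lim_exp.
      * apply derivable_pt_lim_scal, derivable_pt_lim_id.
    + unfold comp, mult_real_fct, id. rewrite eb by lra. ring.
  - intros t ht. apply hcond; lra.
Qed.

Definition Hf (f : R -> R) A B bv gv := forall z, bv*z+gv <> 0 -> f z = z*(A - B*z)/(bv*z+gv).

Lemma inv01 f A B bv gv y : Hf f A B bv gv -> 0 < bv -> 0 < gv -> 0 < B -> A < B ->
  is_sol f y -> 0 <= y 0 <= 1 -> forall t, 0 <= t -> 0 <= y t <= 1.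
Proof.
  intros hf hbv hgv hB hAB hs hy0.
  pose proof (sol_cont0 f y hs) as hc.
  assert (up : forall t, 0 <= t -> y t <= 1).
  { intros t1 ht1. destruct (Rle_or_lt (y t1) 1) as [h|h]; auto. exfalso.
    destruct (last_exit_up y 1 t1 hc ht1 ltac:(lra) h) as [s [hs1 [hs2 hs3]]].
    pose proof (key f y id (fun _ => 1) 0 0 s t1 hs ltac:(lra)) as K.
    assert (y t1 <= y s); [|specialize (hs3 t1 ltac:(lra)); lra].
    unfold id in K. rewrite !Rmult_0_l, !exp_0, !Rmult_1_r, !Rplus_0_r in K. apply K.
    - intros; apply derivable_pt_lim_id.
    - intros t ht. specialize (hs3 t ltac:(lra)). unfold id; rewrite ?Rmult_0_l, ?exp_0.
      rewrite hf by nra.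
      assert (0 < bv * y t + gv) by nra.
      assert (y t * (A - B * y t) / (bv * y t + gv) < 0); [|lra].
      assert (A - B * y t < 0) by nra. assert (y t * (A - B * y t) < 0) by nra. unfold Rdiv. assert (0 < / (bv * y t + gv)) by (apply Rinv_0_lt_compat; lra). nra. }
  intros t1 ht1. split; [|auto].
  destruct (Rle_or_lt 0 (y t1)) as [h|h]; auto. exfalso.
  destruct (last_exit_down y 0 t1 hc ht1 ltac:(lra) h) as [s [hs1 [hs2 hs3]]].
  set (mm := gv / (2*bv)).
  assert (hmm : 0 < mm) by (unfold mm; apply Rdiv_lt_0_compat; lra).
  destruct (hc s ltac:(lra) mm hmm) as [d [hd hd']].
  set (t2 := Rmin t1 (s + d/2)).
  assert (ht2 : s < t2 <= t1).
  { unfold t2. pose proof (Rmin_l t1 (s+d/2)); pose proof (Rmin_r t1 (s+d/2)).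
    split; [apply Rmin_glb_lt; lra| lra]. }
  assert (reg : forall u, s < u <= t2 -> - mm < y u < 0).
  { intros u hu. split; [|apply hs3; unfold t2 in hu; pose proof (Rmin_l t1 (s+d/2)); lra].
    assert (Rabs (u - s) < d). { rewrite Rabs_right by lra. unfold t2 in hu. pose proof (Rmin_r t1 (s+d/2)). lra. }
    specialize (hd' u ltac:(lra) H). rewrite hs2 in hd'. apply Rabs_def2 in hd'. lra. }
  set (L := 2 * (Rabs A + B * mm) / gv).
  assert (hL : 0 <= L). { unfold L. apply Rmult_le_pos; [| left; apply Rinv_0_lt_compat; lra].
    pose proof (Rabs_pos A). nra. }
  assert (bnd : forall u, s < u < t2 -> - y t2 * exp (-L * t2) <= - y u * exp (- L * u)).
  { intros u hu.
    pose proof (key f y Ropp (fun _ => -1) (-L) 0 u t2 hs ltac:(lra)) as K.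
    rewrite !Rmult_0_l, !Rplus_0_r in K. apply K.
    - intros; apply (derivable_pt_lim_opp id), derivable_pt_lim_id.
    - intros t ht. destruct (reg t ltac:(lra)) as [r1 r2].
      assert (hD : gv/2 < bv * y t + gv). { unfold mm in r1.
        assert (bv * (gv / (2*bv)) = gv/2) by (field; lra). nra. }
      rewrite hf by lra.
      assert (hq : (A - B * y t) / (bv * y t + gv) <= L).
      { apply Rmult_le_reg_r with (bv * y t + gv); [lra|]. unfold Rdiv. rewrite Rmult_assoc, Rinv_l by lra.
        unfold L. pose proof (Rle_abs A).
        assert (2 * (Rabs A + B * mm) / gv * (bv * y t + gv) >= Rabs A + B * mm).
        { unfold Rdiv. assert (0 < /gv) by (apply Rinv_0_lt_compat; lra).
          assert (2 * (Rabs A + B*mm) * /gv * (gv/2) = Rabs A + B*mm) by (field; lra).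
          pose proof (Rabs_pos A).
          set (X := 2 * (Rabs A + B * mm) * / gv) in *.
          assert (0 <= X) by (unfold X; apply Rmult_le_pos; [nra|lra]).
          assert (0 <= X * (bv * y t + gv - gv/2)) by (apply Rmult_le_pos; lra).
          lra. }
        assert (B * - mm <= B * y t) by (apply Rmult_le_compat_l; lra).
        lra. }
      assert (e : y t * (A - B * y t) / (bv * y t + gv) = y t * ((A - B * y t) / (bv * y t + gv))) by (field; lra).
      rewrite e. pose proof (exp_pos (-L*t)).
      set (q := (A - B * y t) / (bv * y t + gv)) in *.
      match goal with |- ?g <= 0 => replace g with (- ((- y t) * (L - q) * exp (-L*t))) by ring end.
      assert (0 <= (- y t) * (L - q) * exp (-L*t)) by (apply Rmult_le_pos; [apply Rmult_le_pos|]; lra).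
      lra. }
  assert (K0 : 0 < - y t2 * exp (- L * t2)).
  { destruct (reg t2 ltac:(lra)). pose proof (exp_pos (-L*t2)). nra. }
  destruct (hc s ltac:(lra) _ K0) as [d2 [hd2 hd2']].
  set (u := s + Rmin (d2/2) (t2 - s) / 2).
  assert (0 < Rmin (d2/2) (t2 - s)) by (apply Rmin_glb_lt; lra).
  pose proof (Rmin_l (d2/2) (t2-s)); pose proof (Rmin_r (d2/2) (t2-s)).
  assert (hu : s < u < t2) by (unfold u; lra).
  specialize (bnd u hu).
  assert (Rabs (u - s) < d2) by (rewrite Rabs_right; unfold u; lra).
  specialize (hd2' u ltac:(lra) H2). rewrite hs2 in hd2'. apply Rabs_def2 in hd2'.
  assert (exp (- L * u) <= 1).
  { rewrite <- exp_0. destruct (Req_dec (-L*u) 0) as [e|e]. rewrite e; lra.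
    left. apply exp_increasing. nra. }
  destruct (reg u ltac:(lra)). nra.
Qed.

Lemma posy f A B bv gv y : Hf f A B bv gv -> 0 < bv -> 0 < gv -> 0 < B -> A < B ->
  is_sol f y -> 0 < y 0 <= 1 -> forall t, 0 <= t -> 0 < y t.
Proof.
  intros hf hbv hgv hB hAB hs hy0 t ht.
  destruct ht as [ht|ht]; [|subst; lra].
  pose proof (inv01 f A B bv gv y hf hbv hgv hB hAB hs ltac:(lra)) as hI.
  set (L := (Rabs A + B) / gv).
  pose proof (key f y Ropp (fun _ => -1) L 0 0 t hs ltac:(lra)) as K.
  rewrite !Rmult_0_l, !Rmult_0_r, !Rplus_0_r, exp_0 in K.
  assert (- y t * exp (L * t) <= - y 0 * 1).
  { apply K.
    - intros; apply (derivable_pt_lim_opp id), derivable_pt_lim_id.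
    - intros u hu. destruct (hI u ltac:(lra)) as [h1 h2].
      assert (hD : gv <= bv * y u + gv <= bv + gv) by nra.
      rewrite hf by lra.
      set (q := (A - B * y u) / (bv * y u + gv)).
      assert (e : y u * (A - B * y u) / (bv * y u + gv) = y u * q) by (unfold q; field; lra).
      rewrite e.
      assert (hqD : q * (bv * y u + gv) = A - B * y u) by (unfold q; field; lra).
      assert (hq : - L <= q).
      { unfold L. apply Rmult_le_reg_r with gv; [lra|].
        replace (- ((Rabs A + B) / gv) * gv) with (- (Rabs A + B)) by (field; lra).
        pose proof (Rle_abs (-A)). rewrite Rabs_Ropp in H.
        assert (B * y u <= B) by (replace B with (B*1) at 2 by ring; apply Rmult_le_compat_l; lra).
        destruct (Rle_or_lt 0 q).
        - assert (0 <= q * gv) by (apply Rmult_le_pos; lra). lra.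
        - assert (q * (bv * y u) <= 0). { assert (0 <= bv * y u) by (apply Rmult_le_pos; lra).
            assert (0 <= (-q) * (bv * y u)) by (apply Rmult_le_pos; lra). lra. }
          lra. }
      pose proof (exp_pos (L*u)).
      match goal with |- ?g <= 0 => replace g with (- (y u * (q + L) * exp (L*u))) by ring end.
      assert (0 <= y u * (q + L) * exp (L*u)) by (apply Rmult_le_pos; [apply Rmult_le_pos|]; lra).
      lra. }
  pose proof (exp_pos (L*t)).
  destruct (Rle_or_lt (y t) 0) as [h|h]; [|exact h].
  assert (y t * exp (L*t) <= 0). { assert (0 <= (- y t) * exp (L*t)) by (apply Rmult_le_pos; lra). lra. }
  lra.
Qed.

Lemma abs_lt_sq x e : 0 < e -> x * x < e * e -> Rabs x < e.
Proof.
  intros he h. destruct (Rle_or_lt e (Rabs x)) as [h'|h']; auto.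
  exfalso. assert (x * x = Rabs x * Rabs x).
  { destruct (Rle_or_lt 0 x). rewrite Rabs_right; lra. rewrite Rabs_left; lra. }
  assert (e * e <= Rabs x * Rabs x) by (apply Rmult_le_compat; lra). lra.
Qed.

Lemma conv_exp y c k : 0 < k -> (forall t, 0 <= t -> (y t - c) * (y t - c) <= exp (- k * t)) -> conv_to y c.
Proof.
  intros hk h eps he.
  assert (he2 : 0 < eps * eps) by nra.
  exists (Rmax 0 ((- ln (eps*eps) + 1) / k)). intros t ht.
  pose proof (Rmax_l 0 ((- ln (eps*eps) + 1) / k)) as h1.
  pose proof (Rmax_r 0 ((- ln (eps*eps) + 1) / k)) as h2.
  apply abs_lt_sq; auto.
  eapply Rle_lt_trans. apply h; lra.
  rewrite <- (exp_ln (eps*eps)) by auto.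
  apply exp_increasing.
  assert ((- ln (eps * eps) + 1) / k * k = - ln (eps*eps) + 1) by (field; lra).
  assert ((- ln (eps * eps) + 1) / k * k <= t * k) by (apply Rmult_le_compat_r; lra).
  lra.
Qed.

Lemma gas0 f A B bv gv : Hf f A B bv gv -> 0 < bv -> 0 < gv -> 0 < B -> A <= 0 ->
  glob_asym_stable f closed01 0.
Proof.
  intros hf hbv hgv hB hA y hs hy0. unfold closed01 in hy0.
  pose proof (inv01 f A B bv gv y hf hbv hgv hB ltac:(lra) hs hy0) as hI.
  destruct (Req_dec (y 0) 0) as [e0|n0].
  - intros eps he. exists 0. intros t ht.
    assert (y t <= y 0).
    { destruct ht as [ht|ht]; [|subst; lra].
      pose proof (key f y id (fun _ => 1) 0 0 0 t hs ltac:(lra)) as K.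
      unfold id in K. rewrite !Rmult_0_l, !exp_0, !Rmult_1_r, !Rplus_0_r in K. apply K.
      - intros; apply derivable_pt_lim_id.
      - intros u hu. unfold id. rewrite ?Rmult_0_l, ?exp_0, ?Rmult_0_l, ?Rplus_0_r, ?Rmult_1_r, ?Rmult_1_l.
        destruct (hI u ltac:(lra)) as [h1 h2].
        rewrite hf by nra.
        assert (0 <= B * y u) by (apply Rmult_le_pos; lra).
        assert (0 <= y u * (- (A - B * y u))) by (apply Rmult_le_pos; lra).
        unfold Rdiv. assert (0 < / (bv * y u + gv)) by (apply Rinv_0_lt_compat; nra).
        assert (0 <= y u * (- (A - B * y u)) * / (bv * y u + gv)) by (apply Rmult_le_pos; lra).
        lra. }
    destruct (hI t ht). rewrite Rminus_0_r, Rabs_right; lra.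
  - assert (hp : forall t, 0 <= t -> 0 < y t) by (apply (posy f A B bv gv y hf hbv hgv hB ltac:(lra) hs); lra).
    set (c := B / (bv + gv)).
    assert (hc : 0 < c) by (unfold c; apply Rdiv_lt_0_compat; lra).
    assert (bnd : forall t, 0 < t -> c * t <= / y t).
    { intros t ht.
      assert (HK : (- (fct_cte 1 / id))%F (y t) * exp (0*t) + c*t <= (- (fct_cte 1 / id))%F (y 0) * exp (0*0) + c*0).
      { apply (key f y _ (fun z => - ((0 * z - 1 * 1) / Rsqr z))); [exact hs|lra| |].
        - intros u hu. pose proof (hp u ltac:(lra)).
          eapply dlim_eq. apply derivable_pt_lim_opp. apply derivable_pt_lim_div.
          apply derivable_pt_lim_const. apply derivable_pt_lim_id. unfold id; lra.
          unfold id, fct_cte. reflexivity.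
        - intros u hu. unfold opp_fct, div_fct, fct_cte, id. rewrite ?Rmult_0_l, ?exp_0, ?Rmult_1_r, ?Rmult_0_l, ?Rplus_0_r.
          pose proof (hp u ltac:(lra)) as hpu. destruct (hI u ltac:(lra)) as [h1 h2].
          assert (hD : gv < bv * y u + gv <= bv + gv) by nra.
          rewrite hf by lra.
          replace (- ((0 - 1) / (y u)²) * (y u * (A - B * y u) / (bv * y u + gv)))
            with ((A - B * y u) / (y u * (bv * y u + gv))) by (unfold Rsqr; field; lra).
          apply Rmult_le_reg_r with (y u * (bv * y u + gv)). nra.
          unfold Rdiv. rewrite Rmult_plus_distr_r, Rmult_assoc, Rinv_l by nra.
          unfold c. unfold Rdiv.
          assert (hh: B * / (bv + gv) * (y u * (bv * y u + gv)) = B * y u * ((bv * y u + gv) / (bv + gv))) by (field; lra).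
          rewrite hh.
          assert (gv / (bv+gv) <= (bv * y u + gv) / (bv + gv)) by (unfold Rdiv; apply Rmult_le_compat_r; [left; apply Rinv_0_lt_compat|]; lra).
          assert (0 < gv / (bv+gv)) by (apply Rdiv_lt_0_compat; lra).
          assert (0 <= B * y u) by (apply Rmult_le_pos; lra).
          assert (B * y u * (gv / (bv+gv)) <= B * y u * ((bv * y u + gv) / (bv + gv))) by (apply Rmult_le_compat_l; lra).
          assert (B * y u * ((bv * y u + gv) / (bv + gv)) <= B * y u) .
          { replace (B * y u) with (B * y u * 1) at 2 by ring. apply Rmult_le_compat_l; auto.
            apply Rmult_le_reg_r with (bv+gv); [lra|]. unfold Rdiv. rewrite Rmult_assoc, Rinv_l by lra. lra. }
          lra. }
      unfold opp_fct, div_fct, fct_cte, id in HK.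
      rewrite !Rmult_0_l, !exp_0, !Rmult_1_r, !Rmult_0_r, !Rplus_0_r in HK.
      pose proof (hp 0 ltac:(lra)). assert (0 < 1 / y 0) by (apply Rdiv_lt_0_compat; lra).
      unfold Rdiv in *. rewrite Rmult_1_l in *. lra. }
    intros eps he. exists (2 / (c * eps)). intros t ht.
    assert (hT : 0 < 2 / (c * eps)) by (apply Rdiv_lt_0_compat; nra).
    pose proof (bnd t ltac:(lra)) as hb. pose proof (hp t ltac:(lra)) as hpt.
    rewrite Rminus_0_r, Rabs_right by lra.
    assert (c * (2 / (c * eps)) <= c * t) by (apply Rmult_le_compat_l; lra).
    replace (c * (2 / (c * eps))) with (2 / eps) in H by (field; lra).
    assert (2 / eps <= / y t) by lra.
    apply Rmult_le_compat_r with (r := y t * eps) in H0; [|nra].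
    replace (2 / eps * (y t * eps)) with (2 * y t) in H0 by (field; lra).
    replace (/ y t * (y t * eps)) with eps in H0 by (field; lra).
    lra.
Qed.

Lemma ges0 f A B bv gv : Hf f A B bv gv -> 0 < bv -> 0 < gv -> 0 < B -> A < 0 ->
  exists M kappa, 0 < M /\ 0 < kappa /\
    forall y, is_sol f y -> closed01 (y 0) ->
      forall t, 0 <= t -> Rabs (y t - 0) <= M * exp (- kappa * t).
Proof.
  intros hf hbv hgv hB hA. set (kp := - A / (bv + gv)).
  assert (hkp : 0 < kp) by (unfold kp; apply Rdiv_lt_0_compat; lra).
  exists 1, kp. split; [lra|]. split; [auto|].
  intros y hs hy0 t ht. unfold closed01 in hy0.
  pose proof (inv01 f A B bv gv y hf hbv hgv hB ltac:(lra) hs hy0) as hI.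
  rewrite Rminus_0_r. destruct (hI t ht). rewrite Rabs_right by lra. rewrite Rmult_1_l.
  destruct ht as [ht|ht]; [|subst; rewrite Rmult_0_r, exp_0; lra].
  pose proof (key f y id (fun _ => 1) kp 0 0 t hs ltac:(lra)) as K.
  unfold id in K. rewrite !Rmult_0_l, !Rmult_0_r, !exp_0, !Rmult_1_r, !Rplus_0_r in K.
  assert (y t * exp (kp * t) <= y 0).
  { apply K.
    - intros; apply derivable_pt_lim_id.
    - intros u hu. unfold id. rewrite Rmult_1_l.
      destruct (hI u ltac:(lra)) as [h1 h2].
      assert (hD : gv <= bv * y u + gv <= bv + gv) by nra.
      rewrite hf by lra.
      set (q := (A - B * y u) / (bv * y u + gv)).
      assert (e : y u * (A - B * y u) / (bv * y u + gv) = y u * q) by (unfold q; field; lra).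
      rewrite e.
      assert (hq : q <= - kp).
      { apply Rmult_le_reg_r with (bv * y u + gv); [lra|].
        unfold q, kp. unfold Rdiv. rewrite Rmult_assoc, Rinv_l by lra.
        assert (0 <= B * y u) by (apply Rmult_le_pos; lra).
        replace (- (- A * / (bv + gv)) * (bv * y u + gv)) with (A * ((bv * y u + gv) / (bv + gv))) by (field; lra).
        assert ((bv * y u + gv) / (bv + gv) <= 1).
        { apply Rmult_le_reg_r with (bv+gv); [lra|]. unfold Rdiv. rewrite Rmult_assoc, Rinv_l by lra. lra. }
        assert (A * 1 <= A * ((bv * y u + gv) / (bv + gv))) by (apply Rmult_le_compat_neg_l; lra).
        lra. }
      pose proof (exp_pos (kp*u)).
      match goal with |- ?g <= 0 => replace g with (- (y u * (- kp - q) * exp (kp*u))) by ring end.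
      assert (0 <= y u * (- kp - q) * exp (kp*u)) by (apply Rmult_le_pos; [apply Rmult_le_pos|]; lra).
      lra. }
  replace (- kp * t) with (- (kp * t)) by ring. rewrite exp_Ropp.
  pose proof (exp_pos (kp*t)).
  apply Rmult_le_reg_r with (exp (kp * t)); auto. rewrite Rinv_l by lra. lra.
Qed.

Lemma gas_ee f A B bv gv y : Hf f A B bv gv -> 0 < bv -> 0 < gv -> 0 < A -> A < B ->
  is_sol f y -> 0 < y 0 <= 1 -> conv_to y (A / B).
Proof.
  intros hf hbv hgv hA hAB hs hy0.
  assert (hB : 0 < B) by lra.
  set (ee := A / B).
  assert (hee : 0 < ee < 1).
  { unfold ee; split. apply Rdiv_lt_0_compat; lra.
    apply Rmult_lt_reg_r with B; auto. unfold Rdiv. rewrite Rmult_assoc, Rinv_l; lra. }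
  assert (hAe : A = B * ee) by (unfold ee; field; lra).
  pose proof (inv01 f A B bv gv y hf hbv hgv hB hAB hs ltac:(lra)) as hI.
  pose proof (posy f A B bv gv y hf hbv hgv hB hAB hs hy0) as hp.
  pose proof (sol_cont0 f y hs) as hc0.
  set (c := Rmin (y 0) ee / 2).
  assert (hc : 0 < c < y 0 /\ c < ee).
  { unfold c. pose proof (Rmin_l (y 0) ee). pose proof (Rmin_r (y 0) ee).
    assert (0 < Rmin (y 0) ee) by (apply Rmin_glb_lt; lra). lra. }
  assert (lowc : forall t, 0 <= t -> c <= y t).
  { intros t1 ht1. destruct (Rle_or_lt c (y t1)) as [h|h]; auto. exfalso.
    destruct (last_exit_down y c t1 hc0 ht1 ltac:(lra) h) as [s [hs1 [hs2 hs3]]].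
    pose proof (key f y Ropp (fun _ => -1) 0 0 s t1 hs ltac:(lra)) as K.
    rewrite !Rmult_0_l, !exp_0, !Rmult_1_r, !Rplus_0_r in K.
    assert (- y t1 <= - y s); [|specialize (hs3 t1 ltac:(lra)); lra].
    apply K.
    - intros; apply (derivable_pt_lim_opp id), derivable_pt_lim_id.
    - intros u hu. rewrite ?Rmult_0_l, ?exp_0, ?Rmult_1_r, ?Rplus_0_r.
      specialize (hs3 u ltac:(lra)). pose proof (hp u ltac:(lra)).
      rewrite hf by nra.
      assert (0 < bv * y u + gv) by nra.
      assert (0 < A - B * y u) by (rewrite hAe; assert (B * y u < B * ee) by (apply Rmult_lt_compat_l; lra); lra).
      assert (0 < y u * (A - B * y u) / (bv * y u + gv)) by (apply Rdiv_lt_0_compat; [apply Rmult_lt_0_compat|]; lra).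
      lra. }
  set (k := B * c / (bv + gv)).
  assert (hk : 0 < k) by (unfold k; apply Rdiv_lt_0_compat; [apply Rmult_lt_0_compat|]; lra).
  apply (conv_exp y ee (2*k)); [lra|].
  intros t ht. destruct ht as [ht|ht].
  2:{ subst t. rewrite Rmult_0_r, exp_0. assert (-1 <= y 0 - ee <= 1) by lra.
      assert (0 <= (1 - (y 0 - ee)) * (1 + (y 0 - ee))) by (apply Rmult_le_pos; lra). nra. }
  assert (HK : (fun z => (z - ee) * (z - ee)) (y t) * exp (2*k*t) + 0*t <= (fun z => (z - ee) * (z - ee)) (y 0) * exp (2*k*0) + 0*0).
  { apply (key f y (fun z => (z - ee) * (z - ee)) (fun z => 2 * (z - ee)) (2*k) 0 0 t); [exact hs|lra| |].
    - intros u hu. eapply dlim_eq.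
      apply (derivable_pt_lim_mult (fun z => z - ee) (fun z => z - ee)).
      apply (derivable_pt_lim_minus id (fct_cte ee)). apply derivable_pt_lim_id. apply derivable_pt_lim_const.
      apply (derivable_pt_lim_minus id (fct_cte ee)). apply derivable_pt_lim_id. apply derivable_pt_lim_const.
      ring.
    - intros u hu. simpl.
      destruct (hI u ltac:(lra)) as [h1 h2]. pose proof (lowc u ltac:(lra)) as hl.
      assert (hD : gv < bv * y u + gv <= bv + gv) by nra.
      rewrite hf by lra.
      replace (y u * (A - B * y u) / (bv * y u + gv)) with (- (B * y u / (bv * y u + gv)) * (y u - ee)) by (rewrite hAe; field; lra).
      assert (hkk : k <= B * y u / (bv * y u + gv)).
      { unfold k. unfold Rdiv.
        assert (/ (bv + gv) <= / (bv * y u + gv)) by (apply Rinv_le_contravar; lra).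
        assert (B * c <= B * y u) by (apply Rmult_le_compat_l; lra).
        assert (0 < / (bv + gv)) by (apply Rinv_0_lt_compat; lra).
        apply Rmult_le_compat; try lra. apply Rmult_le_pos; lra. }
      pose proof (exp_pos (2*k*u)).
      match goal with |- ?g <= 0 => replace g with (- (2 * ((y u - ee) * (y u - ee)) * (B * y u / (bv * y u + gv) - k) * exp (2*k*u))) by ring end.
      assert (0 <= (y u - ee) * (y u - ee)) by (pose proof (Rle_0_sqr (y u - ee)); unfold Rsqr in *; lra).
      assert (0 <= 2 * ((y u - ee) * (y u - ee)) * (B * y u / (bv * y u + gv) - k) * exp (2*k*u)) by (apply Rmult_le_pos; [apply Rmult_le_pos|]; lra).
      lra. }
  simpl in HK. rewrite !Rmult_0_l, !Rmult_0_r, exp_0, !Rplus_0_r, Rmult_1_r in HK.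
  assert (hs1 : (y 0 - ee) * (y 0 - ee) <= 1).
  { assert (-1 <= y 0 - ee <= 1) by lra.
    assert (0 <= (1 - (y 0 - ee)) * (1 + (y 0 - ee))) by (apply Rmult_le_pos; lra). nra. }
  replace (- (2*k) * t) with (- (2*k*t)) by ring. rewrite exp_Ropp.
  pose proof (exp_pos (2*k*t)).
  apply Rmult_le_reg_r with (exp (2*k*t)); auto. rewrite Rinv_l by lra. lra.
Qed.

Definition Tq A B bv gv := bv + gv * B / A.
Definition TT A B bv gv z := (gv / A) * ln z - (Tq A B bv gv / B) * ln (A - B * z).
Definition TT' A B bv gv z := (gv / A) / z + Tq A B bv gv / (A - B * z).


Lemma TT_der A B bv gv z : 0 < A -> 0 < B -> 0 < z < A / B ->
  derivable_pt_lim (TT A B bv gv) z (TT' A B bv gv z).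
Proof.
  intros hA hB hz.
  assert (hw : 0 < A - B * z).
  { assert (B * z < B * (A / B)) by (apply Rmult_lt_compat_l; lra).
    replace (B * (A/B)) with A in H by (field; lra). lra. }
  eapply dlim_eq.
  apply (derivable_pt_lim_minus (mult_real_fct (gv/A) ln) (mult_real_fct (Tq A B bv gv / B) (comp ln (fct_cte A - mult_real_fct B id)%F))).
  - apply derivable_pt_lim_scal. apply derivable_pt_lim_ln; lra.
  - apply derivable_pt_lim_scal. apply derivable_pt_lim_comp.
    apply derivable_pt_lim_minus. apply derivable_pt_lim_const. apply derivable_pt_lim_scal, derivable_pt_lim_id.
    apply derivable_pt_lim_ln. unfold minus_fct, fct_cte, mult_real_fct, id. lra.
  - unfold TT', minus_fct, fct_cte, mult_real_fct, id. field. split; lra.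
Qed.

Lemma TT'_eq A B bv gv z : 0 < A -> 0 < B -> 0 < z < A / B ->
  TT' A B bv gv z = (bv * z + gv) / (z * (A - B * z)).
Proof.
  intros hA hB hz.
  assert (hw : 0 < A - B * z).
  { assert (B * z < B * (A / B)) by (apply Rmult_lt_compat_l; lra).
    replace (B * (A/B)) with A in H by (field; lra). lra. }
  unfold TT', Tq. field. repeat split; lra.
Qed.

Lemma TT'_pos A B bv gv z : 0 < A -> 0 < B -> 0 < bv -> 0 < gv -> 0 < z < A / B -> 0 < TT' A B bv gv z.
Proof.
  intros hA hB hbv hgv hz. rewrite TT'_eq by auto.
  assert (hw : 0 < A - B * z).
  { assert (B * z < B * (A / B)) by (apply Rmult_lt_compat_l; lra).
    replace (B * (A/B)) with A in H by (field; lra). lra. }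
  apply Rdiv_lt_0_compat. nra. apply Rmult_lt_0_compat; lra.
Qed.

Lemma TT_incr A B bv gv z1 z2 : 0 < A -> 0 < B -> 0 < bv -> 0 < gv -> 0 < z1 -> z1 < z2 -> z2 < A / B ->
  TT A B bv gv z1 < TT A B bv gv z2.
Proof.
  intros hA hB hbv hgv h1 h12 h2.
  destruct (MVT_cor2 (TT A B bv gv) (TT' A B bv gv) z1 z2 h12) as [c [hc1 hc2]].
  - intros c hc. apply TT_der; auto; lra.
  - assert (0 < TT' A B bv gv c) by (apply TT'_pos; auto; lra).
    assert (0 < TT' A B bv gv c * (z2 - z1)) by (apply Rmult_lt_0_compat; lra). lra.
Qed.

Lemma TT_surj A B bv gv x : 0 < A -> 0 < B -> 0 < bv -> 0 < gv ->
  exists z, 0 < z < A / B /\ TT A B bv gv z = x.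
Proof.
  intros hA hB hbv hgv.
  set (ee := A / B). assert (hee : 0 < ee) by (unfold ee; apply Rdiv_lt_0_compat; lra).
  set (p := gv / A). set (r := Tq A B bv gv / B).
  assert (hp : 0 < p) by (unfold p; apply Rdiv_lt_0_compat; lra).
  assert (hr : 0 < r).
  { unfold r, Tq. apply Rdiv_lt_0_compat; auto.
    assert (0 < gv * B / A) by (apply Rdiv_lt_0_compat; [apply Rmult_lt_0_compat|]; lra). lra. }
  set (y1 := Rmin (ee/2) (exp ((x - 1 + r * ln (A/2)) / p))).
  assert (hy1 : 0 < y1 <= ee/2).
  { unfold y1. split. apply Rmin_glb_lt. lra. apply exp_pos. apply Rmin_l. }
  assert (T1 : TT A B bv gv y1 <= x - 1).
  { unfold TT. fold p r.
    assert (ln y1 <= (x - 1 + r * ln (A/2)) / p).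
    { rewrite <- (ln_exp ((x - 1 + r * ln (A/2)) / p)). apply my_ln_le. lra. apply Rmin_r. }
    assert (p * ln y1 <= p * ((x - 1 + r * ln (A/2)) / p)) by (apply Rmult_le_compat_l; lra).
    replace (p * ((x - 1 + r * ln (A/2)) / p)) with (x - 1 + r * ln (A/2)) in H0 by (field; lra).
    assert (A/2 <= A - B * y1).
    { assert (B * y1 <= B * (ee/2)) by (apply Rmult_le_compat_l; lra).
      replace (B * (ee/2)) with (A/2) in H1 by (unfold ee; field; lra). lra. }
    assert (ln (A/2) <= ln (A - B * y1)) by (apply my_ln_le; lra).
    assert (r * ln (A/2) <= r * ln (A - B * y1)) by (apply Rmult_le_compat_l; lra).
    lra. }
  set (w := Rmin (A/2) (exp (- (x + 1 - p * ln (ee/2)) / r))).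
  assert (hw : 0 < w <= A/2).
  { unfold w. split. apply Rmin_glb_lt. lra. apply exp_pos. apply Rmin_l. }
  set (y2 := (A - w) / B).
  assert (hy2 : ee/2 <= y2 < ee).
  { assert (e : y2 = ee - w / B) by (unfold y2, ee; field; lra).
    assert (0 < w / B) by (apply Rdiv_lt_0_compat; lra).
    assert (w / B <= (A/2) / B) by (unfold Rdiv; apply Rmult_le_compat_r; [left; apply Rinv_0_lt_compat|]; lra).
    replace ((A/2)/B) with (ee/2) in H0 by (unfold ee; field; lra). lra. }
  assert (T2 : x + 1 <= TT A B bv gv y2).
  { unfold TT. fold p r.
    assert (e : A - B * y2 = w) by (unfold y2; field; lra). rewrite e.
    assert (ln w <= - (x + 1 - p * ln (ee/2)) / r).
    { rewrite <- (ln_exp (- (x + 1 - p * ln (ee/2)) / r)). apply my_ln_le. lra. apply Rmin_r. }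
    assert (r * ln w <= r * (- (x + 1 - p * ln (ee/2)) / r)) by (apply Rmult_le_compat_l; lra).
    replace (r * (- (x + 1 - p * ln (ee/2)) / r)) with (- (x + 1 - p * ln (ee/2))) in H0 by (field; lra).
    assert (ln (ee/2) <= ln y2) by (apply my_ln_le; lra).
    assert (p * ln (ee/2) <= p * ln y2) by (apply Rmult_le_compat_l; lra).
    lra. }
  assert (h12 : y1 < y2). { destruct (Rle_or_lt y2 y1); [|auto]. assert (y1 = y2) by lra. subst; rewrite H0 in T1. lra. }
  destruct (IVT_interv (fun z => TT A B bv gv z - x) y1 y2) as [z [hz1 hz2]].
  - intros a ha. apply (dlim_cont _ _ (TT' A B bv gv a - 0)).
    apply (derivable_pt_lim_minus (TT A B bv gv) (fct_cte x)). apply TT_der; auto. fold ee; lra.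
    apply derivable_pt_lim_const.
  - auto.
  - simpl. lra.
  - simpl. lra.
  - exists z. split. fold ee; lra. lra.
Qed.

Lemma unst f A B bv gv : Hf f A B bv gv -> 0 < A -> A < B -> 0 < bv -> 0 < gv ->
  unstable f closed01 0.
Proof.
  intros hf hA hAB hbv hgv. assert (hB : 0 < B) by lra.
  set (ee := A / B).
  assert (hee : 0 < ee) by (unfold ee; apply Rdiv_lt_0_compat; lra).
  assert (hee1 : ee < 1) by (unfold ee; apply Rmult_lt_reg_r with B; auto; unfold Rdiv; rewrite Rmult_assoc, Rinv_l; lra).
  set (T := TT A B bv gv).
  assert (HS : forall x, exists z, 0 < z < ee /\ T z = x) by (intro x; apply TT_surj; auto).
  set (g := fun x => proj1_sig (constructive_indefinite_description _ (HS x))).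
  assert (hg : forall x, 0 < g x < ee /\ T (g x) = x) by (intro x; unfold g; destruct (constructive_indefinite_description _ (HS x)); simpl; auto).
  assert (Tinc : forall z1 z2, 0 < z1 -> z1 < z2 -> z2 < ee -> T z1 < T z2) by (intros; apply TT_incr; auto).
  assert (ginj : forall z, 0 < z < ee -> g (T z) = z).
  { intros z hz. destruct (hg (T z)) as [h1 h2].
    destruct (Rtotal_order (g (T z)) z) as [h|[h|h]]; auto.
    - specialize (Tinc (g (T z)) z ltac:(lra) h ltac:(lra)). lra.
    - specialize (Tinc z (g (T z)) ltac:(lra) h ltac:(lra)). lra. }
  assert (gmono : forall u v, u < v -> g u < g v).
  { intros u v huv. destruct (hg u) as [hu1 hu2]. destruct (hg v) as [hv1 hv2].
    destruct (Rtotal_order (g u) (g v)) as [h|[h|h]]; auto.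
    - rewrite h in hu2. lra.
    - specialize (Tinc (g v) (g u) ltac:(lra) h ltac:(lra)). lra. }
  assert (gmono' : forall u v, u <= v -> g u <= g v).
  { intros u v [h|h]. left; auto. subst; lra. }
  assert (Tder : forall z, 0 < z < ee -> derivable_pt_lim T z (TT' A B bv gv z)) by (intros; apply TT_der; auto).
  assert (gcont : forall x, continuity_pt g x).
  { intro x.
    apply (continuity_pt_recip_interv T g (g (x-1)) (g (x+1))).
    - apply gmono; lra.
    - intros u v hu huv hv. apply Tinc; auto. pose proof (hg (x-1)); lra. pose proof (hg (x+1)); lra.
    - intros u _ _. unfold comp, id. apply hg.
    - intros u hu1 hu2. rewrite (proj2 (hg (x-1))) in hu1. rewrite (proj2 (hg (x+1))) in hu2.
      split; apply gmono'; lra.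
    - intros a ha. apply (dlim_cont _ _ _ (Tder a ltac:(pose proof (hg (x-1)); pose proof (hg (x+1)); lra))).
    - rewrite (proj2 (hg (x-1))), (proj2 (hg (x+1))). lra. }
  assert (gder : forall x, derivable_pt_lim g x (f (g x))).
  { intro x.
    assert (Prf : forall a, g (x-1) <= a <= g (x+1) -> derivable_pt T a).
    { intros a ha. exists (TT' A B bv gv a). apply Tder. pose proof (hg (x-1)); pose proof (hg (x+1)); lra. }
    assert (Prg_incr : g (x-1) <= g x <= g (x+1)) by (split; apply gmono'; lra).
    pose proof (derivable_pt_lim_recip_interv T g (x-1) (x+1) x Prf (gcont x) ltac:(lra) ltac:(lra) Prg_incr) as D.
    assert (hd : derive_pt T (g x) (Prf (g x) Prg_incr) = TT' A B bv gv (g x)).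
    { apply derive_pt_eq_0. apply Tder. apply hg. }
    rewrite hd in D.
    eapply dlim_eq. apply D.
    + intros u _. unfold comp, id. apply hg.
    + assert (0 < TT' A B bv gv (g x)) by (apply TT'_pos; auto; apply hg). lra.
    + destruct (hg x) as [[h1 h2] _].
      rewrite TT'_eq by (auto; fold ee; lra).
      assert (hw : 0 < A - B * g x).
      { assert (B * g x < B * ee) by (apply Rmult_lt_compat_l; lra).
        replace (B * ee) with A in H by (unfold ee; field; lra). lra. }
      rewrite hf by nra. field. repeat split; nra. }
  intro hst. destruct (hst (ee/2) ltac:(lra)) as [d [hd hd']].
  set (z0 := Rmin (d/2) (ee/4)).
  assert (hz0 : 0 < z0 <= ee/4 /\ z0 < d).
  { unfold z0. pose proof (Rmin_l (d/2) (ee/4)); pose proof (Rmin_r (d/2) (ee/4)).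
    assert (0 < Rmin (d/2) (ee/4)) by (apply Rmin_glb_lt; lra). lra. }
  set (ys := fun t => g (t + T z0)).
  assert (hys0 : ys 0 = z0) by (unfold ys; rewrite Rplus_0_l; apply ginj; lra).
  assert (hsol : is_sol f ys).
  { split.
    - intros eps he. pose proof (gcont (T z0)) as hc.
      unfold continuity_pt, continue_in, limit1_in, limit_in in hc.
      destruct (hc eps he) as [dd [hdd hdd']]. exists dd. split; auto.
      intros t ht. unfold ys. rewrite Rplus_0_l.
      destruct (Req_dec t 0) as [->|hne]. rewrite Rplus_0_l, Rminus_diag, Rabs_R0; lra.
      apply hdd'. simpl. unfold R_dist, D_x, no_cond. split. split; [exact I|]. lra.
      replace (t + T z0 - T z0) with t by ring. rewrite Rabs_right; lra.
    - intros t ht. unfold ys.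
      eapply dlim_eq.
      apply (derivable_pt_lim_comp (fun t => t + T z0) g).
      apply (derivable_pt_lim_plus id (fct_cte (T z0))). apply derivable_pt_lim_id. apply derivable_pt_lim_const.
      apply gder. ring. }
  assert (h01 : closed01 (ys 0)) by (unfold closed01; rewrite hys0; lra).
  assert (hsm : Rabs (ys 0 - 0) < d) by (rewrite hys0, Rminus_0_r, Rabs_right; lra).
  set (t1 := T (ee/2) - T z0).
  assert (ht1 : 0 < t1) by (unfold t1; assert (T z0 < T (ee/2)) by (apply Tinc; lra); lra).
  specialize (hd' ys hsol h01 hsm t1 ht1).
  unfold ys, t1 in hd'. replace (T (ee / 2) - T z0 + T z0) with (T (ee/2)) in hd' by ring.
  rewrite ginj in hd' by lra. rewrite Rminus_0_r, Rabs_right in hd'; lra.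
Qed.
Theorem theorem4 (C0 bh gh bv gv : R)
  (hC0 : 0 < C0) (hbh : 0 < bh) (hgh : 0 < gh) (hbv : 0 < bv) (hgv : 0 < gv) :
  let f := F C0 bh gh bv gv in
  let r0 := Rnum0 C0 bh gh bv gv in
  let ee := Ee C0 bh gh bv gv in
  (* the two equilibrium points *)
  (f 0 = 0 /\ f ee = 0 /\ (forall y, f y = 0 -> y = 0 \/ y = ee)) /\
  (* (i) *)
  (r0 <= 1 -> glob_asym_stable f closed01 0) /\
  (r0 < 1 -> glob_exp_stable f closed01 0) /\
  (1 < r0 -> unstable f closed01 0) /\
  (* (ii) *)
  (1 < r0 -> loc_asym_stable f closed01 ee /\ glob_asym_stable f half_open01 ee).
Proof.
  intros f r0 ee.
  set (a := C0 * bh * bv).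
  assert (ha : 0 < a) by (unfold a; apply Rmult_lt_0_compat; [apply Rmult_lt_0_compat|]; lra).
  set (A := a - gh * gv). set (B := a + gh * bv).
  assert (hB : 0 < B) by (unfold B; assert (0 < gh * bv) by (apply Rmult_lt_0_compat; lra); lra).
  assert (hAB : A < B) by (unfold A, B; assert (0 < gh * bv) by (apply Rmult_lt_0_compat; lra);
     assert (0 < gh * gv) by (apply Rmult_lt_0_compat; lra); lra).
  assert (hf : Hf f A B bv gv).
  { intros z hz. unfold f, F, A, B, a. field. auto. }
  assert (hee : ee = A / B) by (unfold ee, Ee, A, B, a; rewrite (Rmult_comm bv gh); reflexivity).
  set (X := bh / gv * (C0 * bv / gh)).
  assert (hX : X = 1 + A / (gv * gh)) by (unfold X, A, a; field; split; lra).
  assert (hgg : 0 < gv * gh) by (apply Rmult_lt_0_compat; lra).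
  assert (hr0 : r0 = sqrt X) by reflexivity.
  assert (c1 : r0 <= 1 -> A <= 0).
  { intro h. destruct (Rle_or_lt A 0) as [h'|h']; auto. exfalso.
    assert (0 < A / (gv*gh)) by (apply Rdiv_lt_0_compat; lra).
    assert (sqrt 1 < sqrt X) by (apply sqrt_lt_1; lra). rewrite sqrt_1 in H0. lra. }
  assert (c2 : r0 < 1 -> A < 0).
  { intro h. destruct (Rle_or_lt 0 A) as [h'|h']; auto. exfalso.
    assert (0 <= A / (gv*gh)) by (unfold Rdiv; apply Rmult_le_pos; [lra| left; apply Rinv_0_lt_compat; lra]).
    assert (sqrt 1 <= sqrt X) by (apply sqrt_le_1; lra). rewrite sqrt_1 in H0. lra. }
  assert (c3 : 1 < r0 -> 0 < A).
  { intro h. destruct (Rle_or_lt A 0) as [h'|h']; auto. exfalso.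
    assert (A / (gv*gh) <= 0).
    { unfold Rdiv. assert (0 < / (gv*gh)) by (apply Rinv_0_lt_compat; lra).
      assert (0 <= (-A) * / (gv*gh)) by (apply Rmult_le_pos; lra). lra. }
    destruct (Rle_or_lt 0 X).
    - assert (sqrt X <= sqrt 1) by (apply sqrt_le_1; lra). rewrite sqrt_1 in H1. lra.
    - rewrite hr0, sqrt_neg_0 in h; lra. }
  split; [|split; [|split; [|split]]].
  - split; [|split].
    + unfold f, F. unfold Rdiv. ring.
    + rewrite hee.
      assert (hD : bv * (A / B) + gv <> 0).
      { assert (hid : bv * A + gv * B = a * (bv + gv)) by (unfold A, B; ring).
        replace (bv * (A / B) + gv) with ((bv * A + gv * B) / B) by (field; lra). rewrite hid.
        assert (0 < a * (bv + gv) / B) by (apply Rdiv_lt_0_compat; [apply Rmult_lt_0_compat|]; lra). lra. }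
      rewrite hf by exact hD.
      replace (A - B * (A / B)) with 0 by (field; lra). unfold Rdiv. ring.
    + intros z hz. destruct (Req_dec (bv * z + gv) 0) as [e|ne].
      * left. unfold f, F in hz. unfold Rdiv in hz. rewrite e, Rinv_0 in hz.
        assert (gh * z = 0) by lra. destruct (Rmult_integral _ _ H); lra.
      * rewrite hf in hz by auto.
        assert (z * (A - B * z) = 0).
        { apply Rmult_eq_reg_r with (/ (bv * z + gv)). rewrite Rmult_0_l. exact hz.
          apply Rinv_neq_0_compat; auto. }
        destruct (Rmult_integral _ _ H) as [h|h]; [left; auto| right].
        rewrite hee. field_simplify_eq; lra.
  - intro h. apply (gas0 f A B bv gv hf hbv hgv hB (c1 h)).
  - intro h. split. apply (gas0 f A B bv gv hf hbv hgv hB ltac:(pose proof (c2 h); lra)).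
    apply (ges0 f A B bv gv hf hbv hgv hB (c2 h)).
  - intro h. apply (unst f A B bv gv hf (c3 h) hAB hbv hgv).
  - intro h. pose proof (c3 h) as hA.
    assert (hee0 : 0 < ee) by (rewrite hee; apply Rdiv_lt_0_compat; lra).
    split.
    + exists (ee/2). split; [lra|]. intros y hs hy0 hd.
      unfold closed01 in hy0. assert (hd2 : - (y 0 - ee) <= Rabs (y 0 - ee)) by (rewrite <- Rabs_Ropp; apply Rle_abs).
      rewrite hee. apply (gas_ee f A B bv gv y hf hbv hgv hA hAB hs). lra.
    + intros y hs hy0. rewrite hee. apply (gas_ee f A B bv gv y hf hbv hgv hA hAB hs hy0).
Qed.
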